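(* Consider the iterates $(\theta_t,K_t)$ of the algorithm in the context, suppose $D_\epsilon$ is positive definite with minimal eigenvalue $\sigma_{\min}(D_\epsilon)$, and suppose there are constants $\rho\in(0,1)$, $c_A,c_E,c_\theta,c_K>0$ such that for all $t$: $\rho(A-BK_t)\le\rho$, $\|A-BK_t\|\le c_A$, $\|E_t\|\le c_E$, $\|\theta_t\|_F\le c_\theta$, $\|K_t\|\le c_K$, $\|K^*\|\le c_K$. Let $c_D,c_P$ be constants, independent of $t$, with $D_{K_t}\preceq c_DI$, $D_{K^*}\preceq c_DI$ and $P_{K_t}\preceq c_PI$ for all $t$, and let $c_3=\|D_{K^*}\|/\sigma_{\min}(R)$. Then for every $t$, with $\widehat G_{K_t}=\theta_t^{22}K_t-\theta_t^{21}$, $$J(K_{t+1})-J(K_t)\le-\beta_t\frac{\sigma_{\min}(D_\epsilon)}{c_3}\big(J(K_t)-J(K^* )\big)-\beta_t\big[\sigma_{\min}(D_\epsilon)-\beta_tc_D(\|R\|+c_P\|B\|^2)\big]\|\widehat G_{K_t}\|_F^2+\beta_tc_D\|G_{K_t}-\widehat G_{K_t}\|_F^2.$$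
   Context: Fix $A\in\mathbb{R}^{d\times d}$, $B\in\mathbb{R}^{d\times k}$, symmetric positive definite $Q,R$, symmetric positive semidefinite $D_\xi$, $\sigma>0$. Dynamics $x_{s+1}=Ax_s+Bu_s+\xi_s$, $\xi_s\sim N(0,D_\xi)$; policy $\pi_K$: $u=-Kx+\sigma\omega$, $\omega\sim N(0,I_k)$; $J(K)=\lim_{S\to\infty}\mathbb{E}\big[\frac1S\sum_{s<S}(x_s^\top Qx_s+u_s^\top Ru_s)\big]$ under $\pi_K$. $D_\epsilon=D_\xi+\sigma^2BB^\top$; $\rho(\cdot)$ spectral radius, $\|\cdot\|$ operator norm, $\sigma_{\min}$ minimal eigenvalue. For $\rho(A-BK)<1$: $D_K$ solves $D_K=D_\epsilon+(A-BK)D_K(A-BK)^\top$, $P_K$ solves $P_K=Q+K^\top RK+(A-BK)^\top P_K(A-BK)$, and $G_K=(R+B^\top P_KB)K-B^\top P_KA$. $K^*=(R+B^\top P^*B)^{-1}B^\top P^*A$ with $P^*$ the stabilizing solution of $P^*=Q+A^\top P^*A-A^\top P^*B(R+B^\top P^*B)^{-1}B^\top P^*A$; $K^*$ minimizes $J$ over stabilizing gains. Algorithm: with step sizes $\alpha_t,\beta_t>0$, $\theta_0=0\in\mathbb{R}^{(d+k)\times(d+k)}$, $K_0=0$; $\theta_{t+1}=\theta_t-\alpha_tg_t$ with $g_t$ a random critic-gradient estimate computed from simulated trajectories under $\pi_{K_t}$, and the actor update $K_{t+1}=K_t-\beta_t(\theta_t^{22}K_t-\theta_t^{21})$, where $\theta^{21}\in\mathbb{R}^{k\times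 d}$, $\theta^{22}\in\mathbb{R}^{k\times k}$ are the lower-left and lower-right blocks of $\theta$. $E_t=\begin{bmatrix}A&B\\-K_tA&-K_tB\end{bmatrix}$. The assumed bounds hold almost surely. *)

(* Defs.v *)
From HB Require Import structures.
From Stdlib Require Import Reals.
From mathcomp Require Import all_boot all_order all_algebra.
From mathcomp Require Import all_classical all_reals all_analysis.
From mathcomp Require Import Rstruct Rstruct_topology.
From mathcomp Require Import complex.

Set Implicit Arguments.
Unset Strict Implicit.
Unset Printing Implicit Defensive.

Import Order.TTheory GRing.Theory Num.Theory.
Local Open Scope ring_scope.
Local Open Scope classical_set_scope.

Notation RR := Rdefinitions.R.

Definition mxC n (M : 'M[RR]_n) : 'M[complex.complex RR]_n :=
  map_mx (fun x : RR => complex.Complex x 0) M.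

Definition cmod (z : complex.complex RR) : RR :=
  let: complex.Complex a b := z in Num.sqrt (a ^+ 2 + b ^+ 2).

Definition spectral_radius n (M : 'M[RR]_n) : RR :=
  sup [set cmod z | z in [set z | eigenvalue (mxC M) z]].

Definition vnorm n (x : 'cV[RR]_n) : RR := Num.sqrt (\sum_i (x i 0) ^+ 2).

Definition opnorm m n (M : 'M[RR]_(m, n)) : RR :=
  sup [set vnorm (M *m x) | x in [set x : 'cV[RR]_n | vnorm x = 1]].

Definition frob m n (M : 'M[RR]_(m, n)) : RR :=
  Num.sqrt (\sum_i \sum_j (M i j) ^+ 2).

Definition lambda_min n (M : 'M[RR]_n) : RR := inf [set l | eigenvalue M l].

Definition qform n (M : 'M[RR]_n) (x : 'cV[RR]_n) : RR := (x^T *m M *m x) 0 0.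

Definition symmx n (M : 'M[RR]_n) : Prop := M^T = M.
Definition psd n (M : 'M[RR]_n) : Prop := symmx M /\ forall x, 0 <= qform M x.
Definition pd n (M : 'M[RR]_n) : Prop :=
  symmx M /\ forall x, x != 0 -> 0 < qform M x.
Definition loewner_le n (M N : 'M[RR]_n) : Prop := psd (N - M).

Definition Deps d k (B : 'M[RR]_(d, k)) (Dxi : 'M[RR]_d) (sigma : RR) : 'M[RR]_d :=
  Dxi + sigma ^+ 2 *: (B *m B^T).

(* Covariance E[x_s x_s^T] of the state under pi_K, started at x_0 = 0:
   Sigma_{s+1} = (A - BK) Sigma_s (A - BK)^T + D_eps. *)
Fixpoint state_cov d k (A : 'M[RR]_d) (B : 'M[RR]_(d, k)) (Dxi : 'M[RR]_d)
    (sigma : RR) (K : 'M[RR]_(k, d)) (s : nat) : 'M[RR]_d :=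
  match s with
  | 0 => 0
  | s'.+1 => let S := state_cov A B Dxi sigma K s' in
             (A - B *m K) *m S *m (A - B *m K)^T + Deps B Dxi sigma
  end.

(* Expected stage cost E[x_s^T Q x_s + u_s^T R u_s] with u_s = -K x_s + sigma w_s,
   w_s ~ N(0, I_k) independent of x_s ~ N(0, Sigma_s). *)
Definition stage_cost d k (A : 'M[RR]_d) (B : 'M[RR]_(d, k)) (Q : 'M[RR]_d)
    (R : 'M[RR]_k) (Dxi : 'M[RR]_d) (sigma : RR) (K : 'M[RR]_(k, d)) (s : nat) : RR :=
  let S := state_cov A B Dxi sigma K s in
  \tr (Q *m S) + \tr (R *m (K *m S *m K^T)) + sigma ^+ 2 * \tr R.

Definition Jcost d k (A : 'M[RR]_d) (B : 'M[RR]_(d, k)) (Q : 'M[RR]_d)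
    (R : 'M[RR]_k) (Dxi : 'M[RR]_d) (sigma : RR) (K : 'M[RR]_(k, d)) : RR :=
  limn (fun S : nat => (S%:R)^-1 * \sum_(s < S) stage_cost A B Q R Dxi sigma K s).

Definition GK d k (A : 'M[RR]_d) (B : 'M[RR]_(d, k)) (R : 'M[RR]_k)
    (P : 'M[RR]_d) (K : 'M[RR]_(k, d)) : 'M[RR]_(k, d) :=
  (R + B^T *m P *m B) *m K - B^T *m P *m A.

Definition theta21 d k (th : 'M[RR]_(d + k)) : 'M[RR]_(k, d) := dlsubmx th.
Definition theta22 d k (th : 'M[RR]_(d + k)) : 'M[RR]_k := drsubmx th.

Definition Ghat d k (th : 'M[RR]_(d + k)) (K : 'M[RR]_(k, d)) : 'M[RR]_(k, d) :=
  theta22 th *m K - theta21 th.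

Definition Emx d k (A : 'M[RR]_d) (B : 'M[RR]_(d, k)) (K : 'M[RR]_(k, d))
    : 'M[RR]_(d + k) :=
  block_mx A B (- (K *m A)) (- (K *m B)).

Definition Kopt d k (A : 'M[RR]_d) (B : 'M[RR]_(d, k)) (R : 'M[RR]_k)
    (P : 'M[RR]_d) : 'M[RR]_(k, d) :=
  invmx (R + B^T *m P *m B) *m B^T *m P *m A.

(* Main.v *)
Require Import Defs.
From HB Require Import structures.
From Stdlib Require Import Reals.
From mathcomp Require Import all_boot all_order all_algebra.
From mathcomp Require Import all_classical all_reals all_analysis.
From mathcomp Require Import Rstruct Rstruct_topology.
From mathcomp Require Import complex.
From mathcomp Require Import ring lra.

Set Implicit Arguments.
Unset Strict Implicit.
Unset Printing Implicit Defensive.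

Import Order.TTheory GRing.Theory Num.Theory.
Import numFieldNormedType.Exports.
Local Open Scope ring_scope.
Local Open Scope classical_set_scope.




Definition zs (u : nat -> RR) :=
  forall e : RR, 0 < e -> exists N, forall s, (N <= s)%N -> `|u s| <= e.

Lemma zs_ext u v : (forall s, u s = v s) -> zs u -> zs v.
Proof. by move=> h hu e he; have [N hN] := hu e he; exists N => s hs; rewrite -h hN. Qed.

Lemma zs0 : zs (fun _ => 0).
Proof. by move=> e he; exists 0%N => s _; rewrite normr0 ltW. Qed.

Lemma zs_le u v : zs v -> (forall s, `|u s| <= `|v s|) -> zs u.
Proof.
move=> hv h e he; have [N hN] := hv e he; exists N => s hs.
exact: le_trans (h s) (hN s hs).
Qed.

Lemma zsD u v : zs u -> zs v -> zs (fun s => u s + v s).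
Proof.
move=> hu hv e he.
have he2 : 0 < e / 2 by rewrite divr_gt0.
have [N1 h1] := hu _ he2; have [N2 h2] := hv _ he2.
exists (maxn N1 N2) => s hs.
rewrite (le_trans (ler_normD _ _)) // [e](splitr e) lerD //.
  by apply: h1; apply: leq_trans hs; rewrite leq_maxl.
by apply: h2; apply: leq_trans hs; rewrite leq_maxr.
Qed.

Lemma zsN u : zs u -> zs (fun s => - u s).
Proof. by move=> hu; apply: (zs_le (u := fun s => - u s) hu) => s; rewrite normrN. Qed.

Lemma zsB u v : zs u -> zs v -> zs (fun s => u s - v s).
Proof. by move=> hu hv; apply: zsD hu (zsN hv). Qed.

Lemma zsZ c u : zs u -> zs (fun s => c * u s).
Proof.
move=> hu e he.
have hc : 0 < `|c| + 1 by rewrite ltr_wpDl.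
have [N hN] := hu (e / (`|c| + 1)) (divr_gt0 he hc).
exists N => s hs; rewrite normrM.
apply: (le_trans (ler_wpM2l (normr_ge0 c) (hN s hs))).
by rewrite mulrA ler_pdivrMr // [_ * e]mulrC ler_wpM2l ?(ltW he) // lerDl.
Qed.

Lemma zsZr c u : zs u -> zs (fun s => u s * c).
Proof. by move=> hu; apply: zs_ext (zsZ c hu) => s; rewrite mulrC. Qed.

Lemma zsM u v : zs u -> zs v -> zs (fun s => u s * v s).
Proof.
move=> hu hv e he.
have [N1 h1] := hu 1 ltr01; have [N2 h2] := hv e he.
exists (maxn N1 N2) => s hs; rewrite normrM -[e]mul1r.
apply: ler_pM; rewrite ?normr_ge0 //.
  by apply: h1; apply: leq_trans hs; rewrite leq_maxl.
by apply: h2; apply: leq_trans hs; rewrite leq_maxr.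
Qed.

Lemma zs_sum (I : Type) (r : seq I) (P : pred I) (F : I -> nat -> RR) :
  (forall i, P i -> zs (F i)) -> zs (fun s => \sum_(i <- r | P i) F i s).
Proof.
move=> h; elim: r => [|x r IH].
  by apply: zs_ext zs0 => s; rewrite big_nil.
case hx: (P x).
  by apply: zs_ext (zsD (h x hx) IH) => s; rewrite big_cons hx.
by apply: zs_ext IH => s; rewrite big_cons hx.
Qed.

Lemma zs_cvg_gen (R : realType) (u : nat -> R) l : (forall e : R, 0 < e -> exists N, forall s, (N <= s)%N -> `|u s - l| <= e) -> u @ \oo --> l.
Proof.
move=> hu; apply/cvgrPdist_le => e he.
have [N hN] := hu e he; exists N => // s /= hs.
by rewrite distrC; apply: hN.
Qed.

Lemma zs_cvg (u : nat -> RR) l : zs (fun s => u s - l) -> u @ \oo --> l.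
Proof. move=> hu; exact: zs_cvg_gen. Qed.

Lemma cvg_zs_gen (R : realType) (u : nat -> R) : u @ \oo --> 0 -> (forall e : R, 0 < e -> exists N, forall s, (N <= s)%N -> `|u s| <= e).
Proof.
move/cvgr0Pnorm_le => h e he; have [N _ hN] := h e he; exists N => s hs; exact: hN.
Qed.

Definition mz m n (M : nat -> 'M[RR]_(m, n)) := forall i j, zs (fun s => M s i j).

Lemma mz_ext m n (M N : nat -> 'M[RR]_(m, n)) : (forall s, M s = N s) -> mz M -> mz N.
Proof. by move=> h hM i j; apply: zs_ext (hM i j) => s; rewrite h. Qed.

Lemma mzMl m n p (C : 'M[RR]_(m, n)) (M : nat -> 'M[RR]_(n, p)) :
  mz M -> mz (fun s => C *m M s).
Proof.
move=> hM i j; apply: zs_ext; last first.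
  by apply: (@zs_sum _ (index_enum 'I_n) xpredT (fun k s => C i k * M s k j)) => k _; apply: zsZ.
by move=> s; rewrite mxE.
Qed.

Lemma mzMr m n p (M : nat -> 'M[RR]_(m, n)) (C : 'M[RR]_(n, p)) :
  mz M -> mz (fun s => M s *m C).
Proof.
move=> hM i j; apply: zs_ext; last first.
  by apply: (@zs_sum _ (index_enum 'I_n) xpredT (fun k s => M s i k * C k j)) => k _; apply: zsZr.
by move=> s; rewrite mxE.
Qed.

Lemma mzMM m n p (M : nat -> 'M[RR]_(m, n)) (N : nat -> 'M[RR]_(n, p)) :
  mz M -> mz N -> mz (fun s => M s *m N s).
Proof.
move=> hM hN i j; apply: zs_ext; last first.
  by apply: (@zs_sum _ (index_enum 'I_n) xpredT (fun k s => M s i k * N s k j)) => k _; apply: zsM.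
by move=> s; rewrite mxE.
Qed.

Lemma mzT m n (M : nat -> 'M[RR]_(m, n)) : mz M -> mz (fun s => (M s)^T).
Proof. by move=> hM i j; apply: zs_ext (hM j i) => s; rewrite mxE. Qed.

Lemma mz_tr n (M : nat -> 'M[RR]_n) : mz M -> zs (fun s => \tr (M s)).
Proof.
move=> hM; apply: zs_ext; last first.
  by apply: (@zs_sum _ (index_enum 'I_n) xpredT (fun k s => M s k k)) => k _; apply: hM.
by move=> s; rewrite /mxtrace.
Qed.

Definition sq n (x : 'cV[RR]_n) : RR := \sum_i x i 0 ^+ 2.
Definition dot n (x y : 'cV[RR]_n) : RR := \sum_i x i 0 * y i 0.

Lemma sq_ge0 n (x : 'cV[RR]_n) : 0 <= sq x.
Proof. by rewrite /sq sumr_ge0 // => i _; rewrite sqr_ge0. Qed.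

Lemma term_le_sum n (F : 'I_n -> RR) j :
  (forall i, 0 <= F i) -> F j <= \sum_i F i.
Proof. by move=> h; rewrite (bigD1 j) //= lerDl sumr_ge0. Qed.

Lemma sq_eq0 n (x : 'cV[RR]_n) : sq x = 0 -> x = 0.
Proof.
move=> h; apply/matrixP => i j; rewrite ord1 mxE; apply/eqP.
rewrite -sqrf_eq0; apply/eqP.
by move: h; rewrite /sq => /psumr_eq0P; apply => // k _; rewrite sqr_ge0.
Qed.

Lemma sq0 n : sq (0 : 'cV[RR]_n) = 0.
Proof. by rewrite /sq big1 // => i _; rewrite mxE expr0n. Qed.

Lemma dotE n (x y : 'cV[RR]_n) : (x^T *m y) 0 0 = dot x y.
Proof. by rewrite mxE; apply: eq_bigr => i _; rewrite mxE. Qed.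

Lemma sqE n (x : 'cV[RR]_n) : (x^T *m x) 0 0 = sq x.
Proof. by rewrite dotE; apply: eq_bigr => i _; rewrite expr2. Qed.

Lemma dotC n (x y : 'cV[RR]_n) : dot x y = dot y x.
Proof. by apply: eq_bigr => i _; rewrite mulrC. Qed.

Lemma dot_le n (x y : 'cV[RR]_n) t :
  0 < t -> 2 * dot x y <= t * sq x + t^-1 * sq y.
Proof.
move=> ht; rewrite /dot /sq !mulr_sumr -big_split /= ler_sum // => i _.
set a := x i 0; set b := y i 0.
have h : 0 <= t^-1 * (t * a - b) ^+ 2 by rewrite mulr_ge0 ?sqr_ge0 // invr_ge0 ltW.
have -> : t * a ^+ 2 + t^-1 * b ^+ 2 = t^-1 * (t * a - b) ^+ 2 + 2 * (a * b).
  by field; rewrite gt_eqF.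
by rewrite lerDr.
Qed.

Lemma vnormE n (x : 'cV[RR]_n) : vnorm x = Num.sqrt (sq x).
Proof. by []. Qed.

Lemma vnorm0 n : vnorm (0 : 'cV[RR]_n) = 0.
Proof. by rewrite vnormE sq0 sqrtr0. Qed.

Lemma vnorm_sq n (x : 'cV[RR]_n) : vnorm x ^+ 2 = sq x.
Proof. by rewrite /vnorm sqr_sqrtr // sq_ge0. Qed.

Lemma vnorm_ge0 n (x : 'cV[RR]_n) : 0 <= vnorm x.
Proof. by rewrite /vnorm sqrtr_ge0. Qed.

Lemma sqZ n c (x : 'cV[RR]_n) : sq (c *: x) = c ^+ 2 * sq x.
Proof. by rewrite /sq mulr_sumr; apply: eq_bigr => i _; rewrite mxE exprMn. Qed.

Lemma vnormZ n c (x : 'cV[RR]_n) : vnorm (c *: x) = `|c| * vnorm x.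
Proof. by rewrite !vnormE sqZ sqrtrM ?sqr_ge0 // sqrtr_sqr. Qed.

Lemma opnorm_ub m n (M : 'M[RR]_(m, n)) :
  has_ubound [set vnorm (M *m x) | x in [set x : 'cV[RR]_n | vnorm x = 1]].
Proof.
exists (Num.sqrt (\sum_i (\sum_j `|M i j|) ^+ 2)) => _ [x /= hx <-].
rewrite /vnorm ler_sqrt ?sumr_ge0 // => [|i _]; last by rewrite sqr_ge0.
have hx1 : forall j, `|x j 0| <= 1.
  move=> j; have h2 : x j 0 ^+ 2 <= 1.
    have : vnorm x ^+ 2 = 1 by rewrite hx expr1n.
    rewrite vnorm_sq => <-; rewrite /sq.
    by apply: (@term_le_sum _ (fun i => x i 0 ^+ 2)) => k; rewrite sqr_ge0.
  rewrite -(@ler_pXn2r _ 2) ?nnegrE ?normr_ge0 // expr1n real_normK ?num_real //.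
apply: ler_sum => i _; rewrite -real_normK ?num_real //.
have hs : 0 <= \sum_j `|M i j| by apply: sumr_ge0 => j _; rewrite normr_ge0.
rewrite ler_pXn2r ?nnegrE ?normr_ge0 //.
rewrite mxE (le_trans (ler_norm_sum _ _ _)) // ler_sum // => j _.
by rewrite normrM ler_piMr ?normr_ge0.
Qed.

Lemma opnorm_le m n (M : 'M[RR]_(m, n)) x : vnorm (M *m x) <= opnorm M * vnorm x.
Proof.
have [hx|hx] := eqVneq (sq x) 0.
  by rewrite (sq_eq0 hx) mulmx0 !vnorm0 mulr0.
have hc : 0 < vnorm x by rewrite vnormE sqrtr_gt0 lt_def hx sq_ge0.
set y := (vnorm x)^-1 *: x.
have hy : vnorm y = 1 by rewrite vnormZ ger0_norm ?invr_ge0 ?ltW // mulVf ?gt_eqF.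
have h1 : vnorm (M *m y) <= opnorm M.
  by rewrite /opnorm; apply: (ub_le_sup (opnorm_ub M)); exists y.
have -> : M *m x = vnorm x *: (M *m y).
  by rewrite /y -scalemxAr scalerA divff ?gt_eqF // scale1r.
by rewrite vnormZ ger0_norm ?vnorm_ge0 // [opnorm M * _]mulrC; apply: ler_wpM2l => //; exact: vnorm_ge0.
Qed.

Lemma qformE n (N : 'M[RR]_n) x : qform N x = dot x (N *m x).
Proof. by rewrite /qform -mulmxA dotE. Qed.

Lemma dot0r n (x : 'cV[RR]_n) : dot x 0 = 0.
Proof. by rewrite /dot big1 // => i _; rewrite mxE mulr0. Qed.

Lemma opnorm_ge0_of m n (M : 'M[RR]_(m, n)) (x : 'cV[RR]_n) : sq x != 0 -> 0 <= opnorm M.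
Proof.
move=> hx; have hc : 0 < vnorm x by rewrite vnormE sqrtr_gt0 lt_def hx sq_ge0.
have := opnorm_le M x; move/(le_trans (vnorm_ge0 _)).
by rewrite pmulr_lge0.
Qed.

Lemma sq_le_opnorm m n (M : 'M[RR]_(m, n)) x : sq (M *m x) <= opnorm M ^+ 2 * sq x.
Proof.
rewrite -!vnorm_sq -exprMn.
by rewrite ler_pXn2r ?nnegrE ?vnorm_ge0 ?opnorm_le //; apply: le_trans (opnorm_le M x); rewrite vnorm_ge0.
Qed.

Lemma qform_le_opnorm n (N : 'M[RR]_n) x : qform N x <= opnorm N * sq x.
Proof.
have [hx|hx] := eqVneq (sq x) 0.
  by rewrite (sq_eq0 hx) qformE mulmx0 dot0r sq0 mulr0.
have ho := opnorm_ge0_of N hx.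
rewrite qformE; have [ho0|hop] := eqVneq (opnorm N) 0.
  have : sq (N *m x) <= 0 by have := sq_le_opnorm N x; rewrite ho0 expr0n mul0r.
  move=> h; have h0 : sq (N *m x) = 0 by apply/eqP; rewrite eq_le h sq_ge0.
  by rewrite (sq_eq0 h0) dot0r ho0 mul0r.
have hp : 0 < opnorm N by rewrite lt_def hop ho.
have := dot_le x (N *m x) hp.
have h2 := sq_le_opnorm N x.
have h3 : (opnorm N)^-1 * sq (N *m x) <= opnorm N * sq x.
  rewrite ler_pdivrMl // mulrA -expr2; exact: h2.
move=> h; have : 2 * dot x (N *m x) <= 2 * (opnorm N * sq x) by lra.
by rewrite ler_pM2l.
Qed.




Lemma cmodE (z : RR[i]) : cmod z = ComplexField.Normc.normc z.
Proof. by case: z. Qed.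

Lemma cmod_ge0 (z : RR[i]) : 0 <= cmod z.
Proof. by case: z => a b; rewrite /cmod sqrtr_ge0. Qed.

Lemma cmodD (a b : RR[i]) : cmod (a + b) <= cmod a + cmod b.
Proof. by rewrite !cmodE; apply: le_normcD. Qed.

Lemma cmodM (a b : RR[i]) : cmod (a * b) = cmod a * cmod b.
Proof. by rewrite !cmodE; apply: ComplexField.Normc.normcM. Qed.

Lemma cmod_real (x : RR) : cmod (Complex x 0) = `|x|.
Proof. by rewrite /cmod expr0n /= addr0 sqrtr_sqr. Qed.

Lemma mem_le_sum (r : seq RR[i]) z : z \in r -> cmod z <= \sum_(w <- r) cmod w.
Proof.
elim: r => [|w r IH] //; rewrite in_cons big_cons => /orP [/eqP ->|hz].
  by rewrite lerDl sumr_ge0 // => x _; rewrite cmod_ge0.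
by rewrite (le_trans (IH hz)) // lerDr cmod_ge0.
Qed.

Lemma char_split n (C : 'M[RR[i]]_n) :
  exists r : seq RR[i], char_poly C = \prod_(z <- r) ('X - z%:P).
Proof.
have [r hr] := closed_field_poly_normal (char_poly C).
exists r; rewrite {1}hr (monicP (char_poly_monic C)) scale1r //.
Qed.

Lemma eig_in n (C : 'M[RR[i]]_n) r :
  char_poly C = \prod_(z <- r) ('X - z%:P) -> forall z, eigenvalue C z -> z \in r.
Proof. by move=> hr z; rewrite eigenvalue_root_char hr root_prod_XsubC. Qed.

Lemma eig_bound n (C : 'M[RR[i]]_n) :
  exists b, forall z, eigenvalue C z -> cmod z <= b.
Proof.
have [r hr] := char_split C.
by exists (\sum_(w <- r) cmod w) => z hz; apply: mem_le_sum; apply: eig_in hr z hz.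
Qed.

Lemma spec_ub n (L : 'M[RR]_n) z : eigenvalue (mxC L) z -> cmod z <= spectral_radius L.
Proof.
move=> hz; rewrite /spectral_radius; apply: ub_le_sup; last by exists z.
have [b hb] := eig_bound (mxC L).
by exists b => _ [w hw <-]; apply: hb.
Qed.

Lemma rec_zs (u v : nat -> RR) r : 0 <= r -> r < 1 -> (forall s, 0 <= u s) -> zs v ->
  (forall s, u s.+1 <= r * u s + `|v s|) -> zs u.
Proof.
move=> r0 r1 u0 hv hrec e he.
have he2 : 0 < e / 2 by rewrite divr_gt0.
have hr1 : 0 < 1 - r by rewrite subr_gt0.
have [N hN] := hv _ (mulr_gt0 he2 hr1).
have key : forall k, u (N + k)%N <= r ^+ k * u N + e / 2.
  elim => [|k IH]; first by rewrite addn0 expr0 mul1r lerDl ltW.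
  rewrite addnS; apply: le_trans (hrec _) _.
  have hvN := hN _ (leq_addr k N).
  have h1 := ler_wpM2l r0 IH.
  rewrite exprS; move: h1 hvN; set a := u (N + k)%N; set b := r ^+ k * u N.
  rewrite -mulrA -/b; move=> h1 hvN.
  have : r * (b + e / 2) = r * b + r * (e / 2) by rewrite mulrDr.
  lra.
have hg : zs (fun k => r ^+ k * u N).
  apply: zsZr => e' he'.
  have := @cvg_zs_gen RR (fun k => r ^+ k) (cvg_expr _) e' he'.
  by apply; rewrite ger0_norm.
have [M hM] := hg _ he2.
exists (N + M)%N => s hs.
have hs' : s = (N + (s - N))%N by rewrite subnKC // (leq_trans (leq_addr M N) hs).
rewrite ger0_norm // hs' (le_trans (key _)) //.
have : r ^+ (s - N) * u N <= e / 2.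
  have := hM (s - N)%N; rewrite ger0_norm ?mulr_ge0 ?exprn_ge0 //; apply.
  by rewrite leq_subRL ?(leq_trans (leq_addr M N) hs) //.
move=> h; rewrite [X in _ <= X](splitr e); lra.
Qed.

Definition cz m n (M : nat -> 'M[RR[i]]_(m, n)) := forall i j, zs (fun s => cmod (M s i j)).

Lemma prod_cz n (C : 'M[RR[i]]_n.+1) (r : seq RR[i]) :
  (forall z, z \in r -> cmod z < 1) ->
  forall X : 'M[RR[i]]_n.+1,
    cz (fun s => X * \prod_(z <- r) (C - z%:M) * C ^+ s) -> cz (fun s => X * C ^+ s).
Proof.
elim: r => [|z r IH] hr X h.
  by move=> i j; apply: zs_ext (h i j) => s; rewrite big_nil mulr1.
have IH' := IH (fun w hw => hr w ltac:(by rewrite in_cons hw orbT)) (X * (C - z%:M)).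
have h2 : cz (fun s => X * (C - z%:M) * C ^+ s).
  apply: IH' => i j; apply: zs_ext (h i j) => s; by rewrite big_cons !mulrA.
move=> i j.
have hz := hr z (mem_head z r).
apply: (@rec_zs _ (fun s => cmod ((X * (C - z%:M) * C ^+ s) i j)) (cmod z)).
- exact: cmod_ge0.
- exact: hz.
- by move=> s; apply: cmod_ge0.
- exact: h2 i j.
- move=> s.
  have -> : (X * C ^+ s.+1) i j = z * (X * C ^+ s) i j + (X * (C - z%:M) * C ^+ s) i j.
    have hX : X * z%:M = z *: X by apply: mul_mx_scalar.
    rewrite mulrBr mulrBl hX -scalerAl -mulrA -exprS.
    move: (X * C ^+ s.+1) (X * C ^+ s) => P1 P2.
    by rewrite !mxE; ring.
  rewrite ger0_norm ?cmod_ge0 //.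
  by rewrite (le_trans (cmodD _ _)) // cmodM.
Qed.

Lemma pow_cz n (C : 'M[RR[i]]_n.+1) :
  (forall z, eigenvalue C z -> cmod z < 1) -> cz (fun s => C ^+ s).
Proof.
move=> hC.
have [r hr] := char_split C.
have h0 : \prod_(z <- r) (C - z%:M) = 0.
  have := Cayley_Hamilton C; rewrite hr rmorph_prod => <-.
  by apply: eq_bigr => z _; rewrite rmorphB /= horner_mx_X horner_mx_C.
have := @prod_cz n C r (fun z hz => hC z (ltac:(by rewrite eigenvalue_root_char hr root_prod_XsubC))) 1.
move=> H i j.
have := H ltac:(move=> i' j'; apply: zs_ext zs0 => s; by rewrite h0 mulr0 mul0r mxE cmodE ComplexField.Normc.normc0) i j.
by apply: zs_ext => s; rewrite mul1r.
Qed.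

Lemma mxC_real n (M : 'M[RR]_n) : mxC M = map_mx (real_complex RR) M.
Proof. by []. Qed.

Lemma mxC_pow n (L : 'M[RR]_n.+1) s : mxC (L ^+ s) = (mxC L) ^+ s.
Proof.
elim: s => [|s IH]; first by rewrite !expr0 mxC_real map_mx1.
by rewrite !exprS mxC_real map_mxM -!mxC_real IH.
Qed.

Lemma pow_mz n (L : 'M[RR]_n) : spectral_radius L < 1 -> mz (fun s => L ^+ s).
Proof.
case: n L => [|n] L hL; first by move=> [].
have hC : cz (fun s => (mxC L) ^+ s).
  by apply: pow_cz => z hz; apply: le_lt_trans (spec_ub hz) hL.
move=> i j; apply: (@zs_le (fun s => (L ^+ s) i j) _ (hC i j)) => s.
by rewrite -mxC_pow /mxC mxE cmod_real normr_id.
Qed.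




Lemma qformD n (M N : 'M[RR]_n) x : qform (M + N) x = qform M x + qform N x.
Proof. by rewrite /qform mulmxDr mulmxDl mxE. Qed.

Lemma qformN n (M : 'M[RR]_n) x : qform (- M) x = - qform M x.
Proof. by rewrite /qform mulmxN mulNmx mxE. Qed.

Lemma qformB n (M N : 'M[RR]_n) x : qform (M - N) x = qform M x - qform N x.
Proof. by rewrite qformD qformN. Qed.

Lemma qformZ n c (M : 'M[RR]_n) x : qform (c *: M) x = c * qform M x.
Proof. by rewrite /qform -scalemxAr -scalemxAl mxE. Qed.

Lemma qform_conj m n (L : 'M[RR]_(m, n)) (X : 'M[RR]_n) y :
  qform (L *m X *m L^T) y = qform X (L^T *m y).
Proof. by rewrite /qform trmx_mul trmxK !mulmxA. Qed.

Lemma qform_sum n (I : Type) (r : seq I) (P : pred I) (F : I -> 'M[RR]_n) x :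
  qform (\sum_(i <- r | P i) F i) x = \sum_(i <- r | P i) qform (F i) x.
Proof.
apply: (big_ind2 (fun M v => qform M x = v)).
- by rewrite /qform mulmx0 mul0mx mxE.
- by move=> A a B b <- <-; rewrite qformD.
- by [].
Qed.

Lemma qform_scalar n c (x : 'cV[RR]_n) : qform (c%:M) x = c * sq x.
Proof. by rewrite /qform mul_mx_scalar -scalemxAl mxE sqE. Qed.

Lemma lyap_psd n (L E X : 'M[RR]_n) : mz (fun s => L ^+ s) ->
  X = E + L *m X *m L^T -> (forall x, 0 <= qform E x) -> forall x, 0 <= qform X x.
Proof.
move=> hL hX hE x.
have key : forall s, qform X x =
    \sum_(i < s) qform E ((L ^+ i)^T *m x) + qform X ((L ^+ s)^T *m x).
  elim => [|s IH]; first by rewrite big_ord0 add0r expr0 trmx1 mul1mx.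
  rewrite IH big_ord_recr /= -addrA; congr (_ + _).
  have hS : L ^+ s *m L = L ^+ s.+1 by rewrite exprSr.
  by rewrite {1}hX qformD qform_conj mulmxA -trmx_mul hS.
have hf : zs (fun s => qform X ((L ^+ s)^T *m x)).
  have h1 : mz (fun s => x^T *m L ^+ s *m X *m (L ^+ s)^T *m x).
    apply: mzMr; apply: mzMM; last exact: mzT.
    by apply: mzMr; apply: mzMl.
  by apply: zs_ext (h1 0 0) => s; rewrite /qform trmx_mul trmxK !mulmxA.
have hge : forall s, qform X ((L ^+ s)^T *m x) <= qform X x.
  move=> s; rewrite (key s) lerDr sumr_ge0 // => i _; exact: hE.
rewrite leNgt; apply/negP => hlt.
have he : 0 < - qform X x / 2 by rewrite divr_gt0 // oppr_gt0.
have [N hN] := hf _ he.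
have h1 := hN N (leqnn N); have h2 := hge N.
move: h1; rewrite ler_norml => /andP [h3 _].
move: hlt h2 h3; clear; move: (qform _ _) (qform _ _) => a b; lra.
Qed.

Lemma cvg_limn_RR (u : nat -> RR) l : u @ \oo --> l -> limn u = l.
Proof. by move=> h; apply: (cvg_lim (@Rhausdorff RR)). Qed.

Lemma lyap_iter d (L E D : 'M[RR]_d) (S : nat -> 'M[RR]_d) :
  S 0%N = 0 -> (forall s, S s.+1 = L *m S s *m L^T + E) -> D = E + L *m D *m L^T ->
  forall s, S s = D - L ^+ s *m D *m (L ^+ s)^T.
Proof.
move=> h0 hS hD; elim => [|s IH]; first by rewrite h0 expr0 mul1mx trmx1 mulmx1 subrr.
rewrite hS IH.
have hp : L ^+ s.+1 = L *m L ^+ s by rewrite exprS.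
rewrite hp trmx_mul mulmxBr mulmxBl !mulmxA.
rewrite [X in _ = X - _]hD.
move: (L *m D *m L^T) (L *m L ^+ s *m D *m (L ^+ s)^T *m L^T) => a b.
by rewrite addrC addrA.
Qed.

Lemma Jform d k (A : 'M[RR]_d) (B : 'M[RR]_(d, k)) (Q : 'M[RR]_d) (R : 'M[RR]_k)
  (Dxi : 'M[RR]_d) (sigma : RR) (K : 'M[RR]_(k, d)) (D : 'M[RR]_d) :
  mz (fun s => (A - B *m K) ^+ s) ->
  D = Deps B Dxi sigma + (A - B *m K) *m D *m (A - B *m K)^T ->
  Jcost A B Q R Dxi sigma K = \tr ((Q + K^T *m R *m K) *m D) + sigma ^+ 2 * \tr R.
Proof.
move=> hL hD.
have hS := @lyap_iter d (A - B *m K) (Deps B Dxi sigma) D (state_cov A B Dxi sigma K)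
   erefl (fun s => erefl) hD.
move: hS hL; move: (A - B *m K) => L hS hL.
set cinf := \tr (Q *m D) + \tr (R *m (K *m D *m K^T)) + sigma ^+ 2 * \tr R.
have hY : mz (fun s => L ^+ s *m D *m (L ^+ s)^T).
  by apply: mzMM; [apply: mzMr | apply: mzT].
have hu : zs (fun s => stage_cost A B Q R Dxi sigma K s - cinf).
  have h1 := mz_tr (mzMl Q hY).
  have h2 := mz_tr (mzMl R (mzMr K^T (mzMl K hY))).
  apply: zs_ext (zsN (zsD h1 h2)) => s.
  rewrite /stage_cost !RplusE ?RmultE hS /cinf !mulmxBr !mulmxBl !linearB /=.
  move: (\tr (Q *m D)) (\tr (Q *m (L ^+ s *m D *m (L ^+ s)^T))) => a b.
  move: (\tr (R *m (K *m D *m K^T))) => c.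
  move: (\tr (R *m (K *m (L ^+ s *m D *m (L ^+ s)^T) *m K^T))) => e.
  move: (sigma ^+ 2 * \tr R) => f.
  lra.
have hc := cesaro (zs_cvg hu).
have hJ : (fun S => (S%:R)^-1 * \sum_(s < S) stage_cost A B Q R Dxi sigma K s) @ \oo --> cinf.
  rewrite -cvg_shiftS; apply: cvg_trans hc; apply: near_eq_cvg; apply: nearW => n /=.
  by rewrite /arithmetic_mean /series /= big_mkord.
rewrite /Jcost (cvg_limn_RR hJ) /cinf.
congr (_ + _).
rewrite mulmxDl linearD /=; congr (_ + _).
by rewrite !mulmxA mxtrace_mulC !mulmxA.
Qed.

Section Spec.



Local Open Scope sesquilinear_scope.
Local Notation Rec := (@complex.Re RR).
Local Notation Imc := (@complex.Im RR).

Lemma ReD : {morph Rec : x y / x + y}.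
Proof. by case=> ? ?; case. Qed.

Lemma Re0 : Rec 0 = 0.
Proof. by []. Qed.

Lemma Re_sum (I : Type) (r : seq I) (P : pred I) (F : I -> RR[i]) :
  Rec (\sum_(i <- r | P i) F i) = \sum_(i <- r | P i) Rec (F i).
Proof. exact: (big_morph Rec ReD Re0). Qed.

Lemma Re_conj_mul (p q : RR[i]) (c : RR) :
  Rec (Num.conj p * (c%:C)%C * q) = c * (Rec p * Rec q + Imc p * Imc q).
Proof. by case: p => x y; case: q => u v /=; ring. Qed.

Lemma Re_conj_mul1 (p q : RR[i]) :
  Rec (Num.conj p * q) = Rec p * Rec q + Imc p * Imc q.
Proof. by case: p => x y; case: q => u v /=; ring. Qed.

Lemma eig_CR n (N : 'M[RR]_n) (x : RR) : eigenvalue (mxC N) ((x%:C)%C) = eigenvalue N x.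
Proof.
by rewrite !eigenvalue_root_char mxC_real -map_char_poly fmorph_root.
Qed.

Lemma outer_entry n (a : 'rV[RR]_n) j k : ((a^T *m a) j k) = a 0 j * a 0 k.
Proof. by rewrite mxE big_ord1 !mxE. Qed.

Lemma spec_decomp n (N : 'M[RR]_n) : N^T = N ->
  exists (s : 'I_n -> RR) (a b : 'I_n -> 'rV[RR]_n),
    [/\ (forall i, eigenvalue N (s i)),
        N = \sum_i s i *: ((a i)^T *m a i + (b i)^T *m b i) &
        1%:M = \sum_i ((a i)^T *m a i + (b i)^T *m b i)].
Proof.
move=> hN.
set NC := mxC N.
have hsym : NC \is symmetricmx.
  apply/is_hermitianmxP; rewrite expr0 scale1r map_mx_id //.
  by rewrite /NC mxC_real map_trmx hN.
have hreal : NC \is a realmx.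
  by apply/mxOverP => i j; rewrite /NC mxE complex_real.
have hherm := realsym_hermsym hsym hreal.
have hnorm := hermitian_normalmx hherm.
set P := spectralmx NC; set sp := spectral_diag NC.
have hdec : NC = invmx P *m diag_mx sp *m P := elimT (@orthomx_spectralP _ _ NC) hnorm.
have hU : P \in unitmx := spectral_unit NC.
have hinv : invmx P = P ^t* by apply: invmx_unitary; apply: spectral_unitarymx.
have hPP : P ^t* *m P = 1%:M by rewrite -hinv mulVmx.
have hspr := hermitian_spectral_diag_real hherm.
have hsp : forall l, sp 0 l = ((Rec (sp 0 l))%:C)%C.
  by move=> l; rewrite RRe_real //; apply: (mxOverP hspr).
exists (fun l => Rec (sp 0 l)), (fun l => row l (map_mx Rec P)), (fun l => row l (map_mx Imc P)).
split.
- move=> l; rewrite -eig_CR -hsp; apply/eigenvalueP.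
  exists ('e_l *m P).
    rewrite -/NC hdec !mulmxA (mulmxK hU) -(rowE l (diag_mx sp)) row_diag_mx -scalemxAl.
    by [].
  apply/eqP => h0.
  have : 'e_l = 0 :> 'rV[RR[i]]_n by rewrite -(mulmxK hU 'e_l) h0 mul0mx.
  move/matrixP => /(_ 0 l); rewrite !mxE !eqxx /= => /eqP; rewrite oner_eq0.
  by [].
- apply/matrixP => j k; rewrite summxE.
  have -> : N j k = Rec (NC j k) by rewrite /NC mxE.
  rewrite hdec hinv mul_mx_diag mxE Re_sum; apply: eq_bigr => l _.
  rewrite [in RHS]mxE [in RHS]mxE !outer_entry !mxE hsp Re_conj_mul.
  by [].
- apply/matrixP => j k; rewrite summxE.
  have -> : (1%:M : 'M[RR]_n) j k = Rec ((1%:M : 'M[RR[i]]_n) j k).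
    by rewrite !mxE; case: (j == k).
  rewrite -hPP mxE Re_sum; apply: eq_bigr => l _.
  by rewrite [in RHS]mxE !outer_entry !mxE Re_conj_mul1.
Qed.

Lemma qform_outer n (a : 'rV[RR]_n) x : qform (a^T *m a) x = (a *m x) 0 0 ^+ 2.
Proof. by rewrite /qform !mulmxA -trmx_mul -mulmxA sqE /sq big_ord1. Qed.

Lemma qform_decomp n (s : 'I_n -> RR) (a b : 'I_n -> 'rV[RR]_n) x :
  qform (\sum_i s i *: ((a i)^T *m a i + (b i)^T *m b i)) x =
  \sum_i s i * ((a i *m x) 0 0 ^+ 2 + (b i *m x) 0 0 ^+ 2).
Proof.
by rewrite qform_sum; apply: eq_bigr => i _; rewrite qformZ qformD !qform_outer.
Qed.

Lemma sq_decomp n (a b : 'I_n -> 'rV[RR]_n) x :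
  1%:M = \sum_i ((a i)^T *m a i + (b i)^T *m b i) ->
  sq x = \sum_i ((a i *m x) 0 0 ^+ 2 + (b i *m x) 0 0 ^+ 2).
Proof.
move=> h; have := qform_scalar 1 x; rewrite mul1r => <-.
by rewrite h qform_sum; apply: eq_bigr => i _; rewrite qformD !qform_outer.
Qed.

Lemma eig_lbound n (N : 'M[RR]_n) : has_lbound [set l | eigenvalue N l].
Proof.
have [b hb] := eig_bound (mxC N).
exists (- b) => l /= hl.
have := hb ((l%:C)%C) (ltac:(by rewrite eig_CR)).
rewrite cmod_real => h; rewrite lerNl (le_trans _ h) // -normrN ler_norm //.
Qed.

Lemma lmin_le n (N : 'M[RR]_n) : N^T = N -> forall x, lambda_min N * sq x <= qform N x.
Proof.
move=> hN x; have [s [a [b [hs h1 h2]]]] := spec_decomp hN.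
rewrite {2}h1 qform_decomp (sq_decomp x h2) mulr_sumr; apply: ler_sum => i _.
apply: ler_wpM2r; first by rewrite addr_ge0 ?sqr_ge0.
by apply: ge_inf; [exact: eig_lbound | exact: hs].
Qed.

Lemma eig_psd n (N : 'M[RR]_n) l : (forall x, 0 <= qform N x) -> eigenvalue N l -> 0 <= l.
Proof.
move=> hN /eigenvalueP [v hv v0].
have hq := hN v^T.
have hs : 0 < sq v^T.
  rewrite lt_def sq_ge0 andbT; apply/eqP => /sq_eq0 h.
  by move/eqP: v0; apply; rewrite -[v]trmxK h trmx0.
have e : (v *m v^T) 0 0 = sq v^T by rewrite -sqE trmxK.
move: hq; rewrite /qform trmxK hv -scalemxAl mxE e.
by rewrite pmulr_lge0.
Qed.

Lemma eig_pd n (N : 'M[RR]_n) l : pd N -> eigenvalue N l -> 0 < l.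
Proof.
move=> [_ hN] /eigenvalueP [v hv v0].
have hv0 : v^T != 0 by apply: contra v0 => /eqP h; rewrite -[v]trmxK h trmx0.
have hq := hN _ hv0.
have hs : 0 < sq v^T.
  rewrite lt_def sq_ge0 andbT; apply/eqP => /sq_eq0 h.
  by move/eqP: hv0; apply.
have e : (v *m v^T) 0 0 = sq v^T by rewrite -sqE trmxK.
move: hq; rewrite /qform trmxK hv -scalemxAl mxE e.
by rewrite pmulr_lgt0.
Qed.

Lemma lmin_ge0 n (N : 'M[RR]_n.+1) : N^T = N -> (forall x, 0 <= qform N x) -> 0 <= lambda_min N.
Proof.
move=> hN hp; have [s [a [b [hs h1 h2]]]] := spec_decomp hN.
apply: lb_le_inf; first by exists (s ord0); exact: hs.
by move=> l /= hl; apply: eig_psd hp hl.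
Qed.

Lemma tr_outer n (X : 'M[RR]_n) (a : 'rV[RR]_n) : \tr (X *m (a^T *m a)) = qform X a^T.
Proof.
by rewrite mulmxA mxtrace_mulC /qform trmxK mulmxA /mxtrace big_ord1.
Qed.

Lemma ptp n (X N : 'M[RR]_n) : N^T = N -> (forall x, 0 <= qform N x) ->
  (forall x, 0 <= qform X x) -> 0 <= \tr (X *m N).
Proof.
move=> hN hNp hX; have [s [a [b [hs h1 h2]]]] := spec_decomp hN.
rewrite h1 mulmx_sumr linear_sum /=; apply: sumr_ge0 => i _.
rewrite -scalemxAr linearZ /= mulmxDr linearD /= !tr_outer.
by apply: mulr_ge0; [apply: eig_psd hNp (hs i) | apply: addr_ge0].
Qed.

End Spec.




Lemma trD m n (A B : 'M[RR]_(m, n)) : (A + B)^T = A^T + B^T.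
Proof. by apply/matrixP => i j; rewrite !mxE. Qed.
Lemma trN m n (A : 'M[RR]_(m, n)) : (- A)^T = - A^T.
Proof. by apply/matrixP => i j; rewrite !mxE. Qed.
Lemma trB m n (A B : 'M[RR]_(m, n)) : (A - B)^T = A^T - B^T.
Proof. by rewrite trD trN. Qed.

Lemma tr_swap d (P D E W L : 'M[RR]_d) :
  D = E + L *m D *m L^T -> P = W + L^T *m P *m L -> \tr (W *m D) = \tr (P *m E).
Proof.
move=> hD hP.
have h1 : \tr (P *m D) = \tr (P *m E) + \tr (L^T *m P *m L *m D).
  rewrite {1}hD mulmxDr linearD /=; congr (_ + _).
  by rewrite !mulmxA mxtrace_mulC !mulmxA.
have h2 : \tr (P *m D) = \tr (W *m D) + \tr (L^T *m P *m L *m D).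
  by rewrite {1}hP mulmxDl linearD.
move: h1 h2; move: (\tr (P *m D)) (\tr (P *m E)) (\tr (W *m D)) (\tr (L^T *m P *m L *m D)).
move=> a b c e h1 h2; lra.
Qed.

Lemma cost_diff d k (A : 'M[RR]_d) (B : 'M[RR]_(d, k)) (Q : 'M[RR]_d) (R : 'M[RR]_k)
  (E : 'M[RR]_d) (K Dl : 'M[RR]_(k, d)) (D D' P : 'M[RR]_d) :
  R^T = R -> P^T = P ->
  D = E + (A - B *m K) *m D *m (A - B *m K)^T ->
  D' = E + (A - B *m (K - Dl)) *m D' *m (A - B *m (K - Dl))^T ->
  P = Q + K^T *m R *m K + (A - B *m K)^T *m P *m (A - B *m K) ->
  \tr ((Q + (K - Dl)^T *m R *m (K - Dl)) *m D') - \tr ((Q + K^T *m R *m K) *m D) =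
  \tr (D' *m (- (Dl^T *m GK A B R P K) - (GK A B R P K)^T *m Dl
              + Dl^T *m (R + B^T *m P *m B) *m Dl)).
Proof.
move=> hR hP hD hD' hPe.
have h1 := tr_swap hD hPe.
have h2 : \tr (P *m E) = \tr ((P - (A - B *m (K - Dl))^T *m P *m (A - B *m (K - Dl))) *m D').
  rewrite mulmxBl linearB /= {1}hD' mulmxDr linearD /=.
  have -> : \tr (P *m ((A - B *m (K - Dl)) *m D' *m (A - B *m (K - Dl))^T))
     = \tr ((A - B *m (K - Dl))^T *m P *m (A - B *m (K - Dl)) *m D').
    by rewrite !mulmxA mxtrace_mulC !mulmxA.
  by rewrite addrK.
rewrite h1 h2 -linearB /= -mulmxBl mxtrace_mulC; congr (\tr (D' *m _)).
rewrite {1}hPe /GK.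
rewrite !(mulmxDl, mulmxDr, mulmxBl, mulmxBr, mulmxN, mulNmx, trD, trB, trN, trmx_mul, trmxK, mulmxA, hR, hP).
apply/matrixP => i j; rewrite !mxE; ring.
Qed.




Definition F2 m n (X : 'M[RR]_(m, n)) : RR := \sum_i \sum_j X i j ^+ 2.

Lemma F2_ge0 m n (X : 'M[RR]_(m, n)) : 0 <= F2 X.
Proof. by apply: sumr_ge0 => i _; apply: sumr_ge0 => j _; rewrite sqr_ge0. Qed.

Lemma frob_sq m n (X : 'M[RR]_(m, n)) : frob X ^+ 2 = F2 X.
Proof. by rewrite /frob sqr_sqrtr // F2_ge0. Qed.

Lemma F2_tr m n (X : 'M[RR]_(m, n)) : F2 X^T = F2 X.
Proof. by rewrite /F2 exchange_big; apply: eq_bigr => i _; apply: eq_bigr => j _; rewrite mxE. Qed.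

Lemma sq_row m n (X : 'M[RR]_(m, n)) i : sq (row i X)^T = \sum_j X i j ^+ 2.
Proof. by apply: eq_bigr => j _; rewrite !mxE. Qed.

Lemma tr_rows m n (X : 'M[RR]_(m, n)) (N : 'M[RR]_n) :
  \tr (X *m N *m X^T) = \sum_i qform N (row i X)^T.
Proof.
rewrite /mxtrace; apply: eq_bigr => i _.
rewrite /qform trmxK mxE [in RHS]mxE; apply: eq_bigr => k _.
by rewrite -row_mul !mxE.
Qed.

Lemma tr_lb m n (X : 'M[RR]_(m, n)) (N : 'M[RR]_n) c :
  (forall x, c * sq x <= qform N x) -> c * F2 X <= \tr (X *m N *m X^T).
Proof.
move=> h; rewrite tr_rows /F2 mulr_sumr; apply: ler_sum => i _.
by rewrite -sq_row h.
Qed.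

Lemma tr_ub m n (X : 'M[RR]_(m, n)) (N : 'M[RR]_n) c :
  (forall x, qform N x <= c * sq x) -> \tr (X *m N *m X^T) <= c * F2 X.
Proof.
move=> h; rewrite tr_rows /F2 mulr_sumr; apply: ler_sum => i _.
by rewrite -sq_row h.
Qed.

Lemma tr_gram m n (D : 'M[RR]_n) (X : 'M[RR]_(m, n)) :
  \tr (D *m (X^T *m X)) = \tr (X *m D *m X^T).
Proof. by rewrite mulmxA mxtrace_mulC mulmxA. Qed.

Lemma qform_conjT m n (L : 'M[RR]_(m, n)) (X : 'M[RR]_m) y :
  qform (L^T *m X *m L) y = qform X (L *m y).
Proof. by rewrite -{2}[L]trmxK qform_conj trmxK. Qed.

Lemma qform_cross m n (X Y : 'M[RR]_(m, n)) x :
  qform (X^T *m Y) x = dot (X *m x) (Y *m x).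
Proof. by rewrite /qform -dotE trmx_mul !mulmxA. Qed.

Lemma dot_sq n (x : 'cV[RR]_n) : dot x x = sq x.
Proof. by apply: eq_bigr => i _; rewrite expr2. Qed.

Lemma trZ m n c (A : 'M[RR]_(m, n)) : (c *: A)^T = c *: A^T.
Proof. by apply/matrixP => i j; rewrite !mxE. Qed.

Lemma trX n (L : 'M[RR]_n) s : (L ^+ s)^T = L^T ^+ s.
Proof.
elim: s => [|s IH]; first by rewrite !expr0 trmx1.
have e1 : L ^+ s.+1 = L ^+ s *m L by rewrite exprSr.
have e2 : L^T ^+ s.+1 = L^T *m L^T ^+ s by rewrite exprS.
by rewrite e1 e2 trmx_mul IH.
Qed.

Lemma loew_sym n (X : 'M[RR]_n) c : loewner_le X (c%:M) -> X^T = X.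
Proof.
move=> [hs _]; move: hs; rewrite /symmx trB tr_scalar_mx => h.
by apply: oppr_inj; apply: (addrI (c%:M)).
Qed.

Lemma loew_ub n (X : 'M[RR]_n) c : loewner_le X (c%:M) -> forall x, qform X x <= c * sq x.
Proof. by move=> [_ h] x; have := h x; rewrite qformB qform_scalar subr_ge0. Qed.

Lemma pd_psd n (X : 'M[RR]_n) : pd X -> forall x, 0 <= qform X x.
Proof.
move=> [_ h] x; have [->|hx] := eqVneq x 0; last exact: ltW (h x hx).
by rewrite /qform mulmx0 mxE.
Qed.

Lemma lmin_ge0' n (N : 'M[RR]_n) : (0 < n)%N -> N^T = N -> (forall x, 0 <= qform N x) -> 0 <= lambda_min N.
Proof. by case: n N => // n N _; apply: lmin_ge0. Qed.

Lemma unitv n : (0 < n)%N -> exists e : 'cV[RR]_n, sq e = 1.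
Proof.
case: n => // n _; exists (delta_mx 0 0).
rewrite /sq (bigD1 0) //= big1 ?addr0 ?mxE ?eqxx ?expr1n //.
by move=> i /negbTE hi; rewrite mxE hi /= expr0n.
Qed.

Lemma flat0 k d (M : 'M[RR]_(k, d)) : (k = 0%N \/ d = 0%N) -> M = 0.
Proof.
move=> h; apply/matrixP => i j; exfalso.
case: h => h.
  by have := ltn_ord i; move: (nat_of_ord i); rewrite h.
by have := ltn_ord j; move: (nat_of_ord j); rewrite h.
Qed.

Lemma frob0 m n : frob (0 : 'M[RR]_(m, n)) = 0.
Proof.
rewrite /frob big1 ?sqrtr0 // => i _; rewrite big1 // => j _; by rewrite mxE expr0n.
Qed.

Lemma Zid k d (G Gh : 'M[RR]_(k, d)) (M : 'M[RR]_k) b :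
  - ((b *: Gh)^T *m G) - G^T *m (b *: Gh) + (b *: Gh)^T *m M *m (b *: Gh)
  = (- b) *: (G^T *m G + Gh^T *m Gh - (G - Gh)^T *m (G - Gh)) + (b ^+ 2) *: (Gh^T *m M *m Gh).
Proof.
rewrite trZ trB -!scalemxAl -!scalemxAr.
rewrite !(mulmxDl, mulmxBl, mulmxDr, mulmxBr, mulmxN, mulNmx).
by apply/matrixP => i j; rewrite !mxE; ring.
Qed.

Lemma tr_Zexp n (D X Y W V : 'M[RR]_n) b :
  \tr (D *m ((- b) *: (X + Y - W) + b ^+ 2 *: V)) =
  - b * (\tr (D *m X) + \tr (D *m Y) - \tr (D *m W)) + b ^+ 2 * \tr (D *m V).
Proof.
rewrite mulmxDr -!scalemxAr linearD /= !linearZ /=.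
by rewrite !(mulmxDr, mulmxN, linearD, linearN) /=.
Qed.

Lemma Z1sym k d (Dl G : 'M[RR]_(k, d)) (M : 'M[RR]_k) c : M^T = M ->
  (- (Dl^T *m G) - G^T *m Dl + Dl^T *m M *m Dl + c *: (G^T *m G))^T =
   - (Dl^T *m G) - G^T *m Dl + Dl^T *m M *m Dl + c *: (G^T *m G).
Proof.
move=> hM; rewrite !(trD, trB, trN, trZ, trmx_mul, trmxK) hM.
rewrite !mulmxA; apply/matrixP => i j; rewrite !mxE; ring.
Qed.

Lemma Z1psd k d (Dl G : 'M[RR]_(k, d)) (M : 'M[RR]_k) lam : 0 < lam ->
  (forall y, lam * sq y <= qform M y) ->
  forall x, 0 <= qform (- (Dl^T *m G) - G^T *m Dl + Dl^T *m M *m Dl + lam^-1 *: (G^T *m G)) x.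
Proof.
move=> hlp hMlb x.
rewrite !(qformD, qformB, qformN, qformZ) qform_conjT !qform_cross dot_sq.
rewrite (dotC (G *m x)).
have h1 := dot_le (Dl *m x) (G *m x) hlp.
have h2 := hMlb (Dl *m x).
move: h1 h2.
move: (dot (Dl *m x) (G *m x)) (qform M (Dl *m x)) (lam * sq (Dl *m x)) (lam^-1 * sq (G *m x)) => a b e f.
move=> h1 h2; lra.
Qed.

Lemma final_arith (b q j fg fh fe t1 t2 t3 t4 sm cd cc : RR) :
  b * (sm * fg) <= b * t1 -> b * (q * j) <= b * (sm * fg) ->
  b * (sm * fh) <= b * t2 -> b * t3 <= b * (cd * fe) ->
  b ^+ 2 * t4 <= b ^+ 2 * (cd * (cc * fh)) ->
  - b * (t1 + t2 - t3) + b ^+ 2 * t4 <= - b * q * j - b * (sm - b * cd * cc) * fh + b * cd * fe.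
Proof. move=> e1 e2 e3 e4 e5; lra. Qed.


Unset Implicit Arguments.
Local Close Scope classical_set_scope.

Theorem lemma7
  (d k : nat)
  (A : 'M[RR]_d) (B : 'M[RR]_(d, k)) (Q : 'M[RR]_d) (R : 'M[RR]_k)
  (Dxi : 'M[RR]_d) (sigma : RR)
  (hQ : pd Q) (hR : pd R) (hDxi : psd Dxi) (hsigma : 0 < sigma)
  (* optimal gain K* from the stabilizing solution P* of the Riccati equation *)
  (Pstar : 'M[RR]_d)
  (hPsym : symmx Pstar)
  (hDARE : Pstar = Q + A^T *m Pstar *m A
                   - A^T *m Pstar *m B *m invmx (R + B^T *m Pstar *m B)
                       *m B^T *m Pstar *m A)
  (hPstab : spectral_radius (A - B *m Kopt A B R Pstar) < 1)
  (* the algorithm *)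
  (alpha beta : nat -> RR) (halpha : forall t, 0 < alpha t)
  (hbeta : forall t, 0 < beta t)
  (theta g : nat -> 'M[RR]_(d + k)) (K : nat -> 'M[RR]_(k, d))
  (htheta0 : theta 0%N = 0) (hK0 : K 0%N = 0)
  (htheta : forall t, theta t.+1 = theta t - alpha t *: g t)
  (hK : forall t, K t.+1 = K t - beta t *: Ghat (theta t) (K t))
  (* D_eps positive definite *)
  (hDeps : pd (Deps B Dxi sigma))
  (* uniform bounds *)
  (rho cA cE cth cK : RR)
  (hrho0 : 0 < rho) (hrho1 : rho < 1)
  (hcA : 0 < cA) (hcE : 0 < cE) (hcth : 0 < cth) (hcK : 0 < cK)
  (hrhoK : forall t, spectral_radius (A - B *m K t) <= rho)
  (hAK : forall t, opnorm (A - B *m K t) <= cA)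
  (hE : forall t, opnorm (Emx A B (K t)) <= cE)
  (hth : forall t, frob (theta t) <= cth)
  (hKt : forall t, opnorm (K t) <= cK)
  (hKs : opnorm (Kopt A B R Pstar) <= cK)
  (* D_{K_t}, P_{K_t}, D_{K*} as solutions of their Lyapunov equations *)
  (DK PK : nat -> 'M[RR]_d) (DKs : 'M[RR]_d)
  (hDK : forall t, DK t = Deps B Dxi sigma
                          + (A - B *m K t) *m DK t *m (A - B *m K t)^T)
  (hPK : forall t, PK t = Q + (K t)^T *m R *m K t
                          + (A - B *m K t)^T *m PK t *m (A - B *m K t))
  (hDKs : DKs = Deps B Dxi sigma
                + (A - B *m Kopt A B R Pstar) *m DKs
                  *m (A - B *m Kopt A B R Pstar)^T)
  (cD cP : RR)
  (hcD : forall t, loewner_le (DK t) (cD%:M))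
  (hcDs : loewner_le DKs (cD%:M))
  (hcP : forall t, loewner_le (PK t) (cP%:M)) :
  let J := Jcost A B Q R Dxi sigma in
  let smin := lambda_min (Deps B Dxi sigma) in
  let c3 := opnorm DKs / lambda_min R in
  forall t : nat,
    J (K t.+1) - J (K t)
    <= - beta t * (smin / c3) * (J (K t) - J (Kopt A B R Pstar))
       - beta t * (smin - beta t * cD * (opnorm R + cP * opnorm B ^+ 2))
         * frob (Ghat (theta t) (K t)) ^+ 2
       + beta t * cD * frob (GK A B R (PK t) (K t) - Ghat (theta t) (K t)) ^+ 2.
Proof.
move=> J smin c3 t.
have [hz|[hd hk]] : (k = 0%N \/ d = 0%N) \/ ((0 < d)%N /\ (0 < k)%N).
  case: (posnP d) => hd0; first by left; right.
  case: (posnP k) => hk0; first by left; left.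
  by right.
  rewrite /J (flat0 (K t.+1) hz) (flat0 (K t) hz) (flat0 (Kopt A B R Pstar) hz) subrr.
  rewrite (flat0 (Ghat (theta t) 0) hz) (flat0 (GK A B R (PK t) 0 - 0) hz) frob0 expr0n /=.
  by rewrite !mulr0 ?subr0 ?addr0.
set E := Deps B Dxi sigma.
set Kt := K t; set Kt1 := K t.+1; set Ks := Kopt A B R Pstar.
set D1 := DK t.+1; set D0 := DK t; set P := PK t.
set G := GK A B R P Kt; set Gh := Ghat (theta t) Kt.
set M := R + B^T *m P *m B.
have hRsym : R^T = R := hR.1.
have hEsym : E^T = E := hDeps.1.
have hD1sym : D1^T = D1 := loew_sym (hcD t.+1).
have hPsym' : P^T = P := loew_sym (hcP t).
have hDssym : DKs^T = DKs := loew_sym hcDs.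
have hEpsd := pd_psd hDeps.
have hRpsd := pd_psd hR.
have hQpsd := pd_psd hQ.
have hst : forall t', mz (fun s => (A - B *m K t') ^+ s).
  by move=> t'; apply: pow_mz; apply: le_lt_trans (hrhoK t') hrho1.
have hsts : mz (fun s => (A - B *m Ks) ^+ s) := pow_mz hPstab.
have hD1psd : forall x, 0 <= qform D1 x := lyap_psd (hst t.+1) (hDK t.+1) hEpsd.
have hDspsd : forall x, 0 <= qform DKs x := lyap_psd hsts hDKs hEpsd.
have hPpsd : forall x, 0 <= qform P x.
  apply: (@lyap_psd d (A - B *m Kt)^T (Q + Kt^T *m R *m Kt)).
  - by apply: mz_ext (mzT (hst t)) => s; rewrite trX.
  - by rewrite trmxK; apply: hPK.
  - by move=> x; rewrite qformD qform_conjT addr_ge0.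
have hsmin0 : 0 <= smin := lmin_ge0' hd hEsym hEpsd.
have hlam0 : 0 <= lambda_min R := lmin_ge0' hk hRsym hRpsd.
have [e0 he0] := unitv hd.
have ho0 : 0 <= opnorm DKs by apply: (@opnorm_ge0_of _ _ _ e0); rewrite he0 oner_neq0.
have hcD0 : 0 <= cD.
  have := loew_ub (hcD t.+1) e0; rewrite he0 mulr1; apply: le_trans; exact: hD1psd.
have hcP0 : 0 <= cP.
  have := loew_ub (hcP t) e0; rewrite he0 mulr1; apply: le_trans; exact: hPpsd.
have hD1lb : forall x, smin * sq x <= qform D1 x.
  move=> x; rewrite /D1 (hDK t.+1) qformD qform_conj.
  by rewrite (le_trans (lmin_le hEsym x)) // lerDl hD1psd.
have hD1ub := loew_ub (hcD t.+1).
have hPub := loew_ub (hcP t).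
have hMsym : M^T = M by rewrite /M trD !trmx_mul trmxK hRsym hPsym' mulmxA.
have hMlb : forall y, lambda_min R * sq y <= qform M y.
  by move=> y; rewrite qformD qform_conjT (le_trans (lmin_le hRsym y)) // lerDl hPpsd.
have hMpsd : forall y, 0 <= qform M y.
  by move=> y; rewrite qformD qform_conjT addr_ge0.
set c := opnorm R + cP * opnorm B ^+ 2.
have hMub : forall y, qform M y <= c * sq y.
  move=> y; rewrite qformD qform_conjT /c mulrDl lerD ?qform_le_opnorm //.
  rewrite (le_trans (hPub _)) // -mulrA ler_wpM2l //; exact: sq_le_opnorm.
have hJ1 := Jform Q R (hst t.+1) (hDK t.+1).
have hJ0 := Jform Q R (hst t) (hDK t).
have hJs := Jform Q R hsts hDKs.
have hKt1 : Kt1 = Kt - beta t *: Gh := hK t.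
have hdiff := @cost_diff d k A B Q R E Kt (beta t *: Gh) D0 D1 P hRsym hPsym' (hDK t)
   ltac:(by rewrite -hKt1; exact: (hDK t.+1)) (hPK t).
rewrite -hKt1 in hdiff.
set Er := G - Gh.
set T1 := \tr (D1 *m (G^T *m G)); set T2 := \tr (D1 *m (Gh^T *m Gh)).
set T3 := \tr (D1 *m (Er^T *m Er)); set T4 := \tr (D1 *m (Gh^T *m M *m Gh)).
have hstep : \tr (D1 *m (- ((beta t *: Gh)^T *m G) - G^T *m (beta t *: Gh)
          + (beta t *: Gh)^T *m M *m (beta t *: Gh))) = - beta t * (T1 + T2 - T3) + beta t ^+ 2 * T4.
  by rewrite Zid tr_Zexp.
rewrite hstep in hdiff.
have hJdiff : J Kt1 - J Kt = - beta t * (T1 + T2 - T3) + beta t ^+ 2 * T4.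
  rewrite /J hJ1 hJ0 -hdiff.
  move: (\tr ((Q + Kt1^T *m R *m Kt1) *m D1)) (\tr ((Q + Kt^T *m R *m Kt) *m D0)) => a b.
  move: (sigma ^+ 2 * \tr R) => f; lra.
have hT1 : smin * F2 G <= T1 by rewrite /T1 tr_gram; apply: tr_lb.
have hT2 : smin * F2 Gh <= T2 by rewrite /T2 tr_gram; apply: tr_lb.
have hT3 : T3 <= cD * F2 Er by rewrite /T3 tr_gram; apply: tr_ub.
have hT4 : T4 <= cD * (c * F2 Gh).
  set N := Gh^T *m M *m Gh.
  have hNsym : N^T = N by rewrite /N !trmx_mul trmxK hMsym mulmxA.
  have hNpsd : forall x, 0 <= qform N x by move=> x; rewrite /N qform_conjT.
  have hX : forall x, 0 <= qform (cD%:M - D1) x := (hcD t.+1).2.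
  have h1 := ptp hNsym hNpsd hX.
  have h2 : \tr N <= c * F2 Gh.
    rewrite /N -{2}[Gh]trmxK -F2_tr; exact: tr_ub.
  move: h1; rewrite mulmxBl linearB /= mul_scalar_mx linearZ /= subr_ge0 -/T4 => h1.
  apply: le_trans h1 _; apply: ler_wpM2l => //.
have hK' : Kt - (Kt - Ks) = Ks by rewrite opprB addrC subrK.
have hcd := @cost_diff d k A B Q R E Kt (Kt - Ks) D0 DKs P hRsym hPsym' (hDK t)
   ltac:(by rewrite hK'; exact: hDKs) (hPK t).
rewrite hK' -/G -/M in hcd.
set Dl := Kt - Ks in hcd.
set Z0 := - (Dl^T *m G) - G^T *m Dl + Dl^T *m M *m Dl in hcd.
have hJdom : J Kt - J Ks = - \tr (DKs *m Z0).
  rewrite /J hJ0 hJs -hcd.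
  move: (\tr ((Q + Ks^T *m R *m Ks) *m DKs)) (\tr ((Q + Kt^T *m R *m Kt) *m D0)) => a b.
  move: (sigma ^+ 2 * \tr R) => f; lra.
have hc30 : 0 <= c3 by rewrite /c3 divr_ge0.
have hdom : smin / c3 * (J Kt - J Ks) <= smin * F2 G.
  have [hc3|hc3] := eqVneq c3 0.
    by rewrite hc3 invr0 mulr0 mul0r mulr_ge0 // F2_ge0.
  have hl : lambda_min R != 0.
    by apply: contra hc3 => /eqP hl; rewrite /c3 hl invr0 mulr0.
  have hlp : 0 < lambda_min R by rewrite lt_def hl hlam0.
  have hc3p : 0 < c3 by rewrite lt_def hc3 hc30.
  have hb : J Kt - J Ks <= c3 * F2 G.
    set lam := lambda_min R.
    set Z1 := Z0 + lam^-1 *: (G^T *m G).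
    have hZ1sym : Z1^T = Z1 by rewrite /Z1 /Z0 Z1sym.
    have hZ1psd : forall x, 0 <= qform Z1 x by rewrite /Z1 /Z0; apply: Z1psd.
    have h1 := ptp hZ1sym hZ1psd hDspsd.
    have h2 : \tr (DKs *m (G^T *m G)) <= opnorm DKs * F2 G.
      by rewrite tr_gram; apply: tr_ub => x; apply: qform_le_opnorm.
    move: h1; rewrite /Z1 mulmxDr -scalemxAr linearD linearZ /= => h1.
    rewrite hJdom /c3 -mulrA [_^-1 * _]mulrC mulrA -/lam.
    have h3 : lam^-1 * \tr (DKs *m (G^T *m G)) <= lam^-1 * (opnorm DKs * F2 G).
      by apply: ler_wpM2l => //; rewrite invr_ge0 ltW.
    move: h1 h3; rewrite mulrA [lam^-1 * _]mulrC.
    move: (\tr (DKs *m Z0)) (lam^-1 * \tr (DKs *m (G^T *m G))) (opnorm DKs / lam * F2 G) => a b e.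
    move=> h1 h3; lra.
  have : smin / c3 * (J Kt - J Ks) <= smin / c3 * (c3 * F2 G).
    by apply: ler_wpM2l => //; rewrite divr_ge0.
  by rewrite mulrA divfK.
rewrite hJdiff !frob_sq.
have hb := ltW (hbeta t).
have e1 : beta t * (smin * F2 G) <= beta t * T1 := ler_wpM2l hb hT1.
have e1' : beta t * (smin / c3 * (J Kt - J Ks)) <= beta t * (smin * F2 G) := ler_wpM2l hb hdom.
have e2 : beta t * (smin * F2 Gh) <= beta t * T2 := ler_wpM2l hb hT2.
have e3 : beta t * T3 <= beta t * (cD * F2 Er) := ler_wpM2l hb hT3.
have e4 : beta t ^+ 2 * T4 <= beta t ^+ 2 * (cD * (c * F2 Gh)) := ler_wpM2l (sqr_ge0 _) hT4.
exact: (final_arith e1 e1' e2 e3 e4).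
Qed.
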